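(* Let $(X,Y,\phi)$ be an $L$-context and $X'\subseteq X$, $Y'\subseteq Y$. With $S_1,S_2\colon\mathcal{K}\phi\to\mathcal{K}\phi_{X',Y'}$ and $F_1,F_2\colon\mathcal{K}\phi_{X',Y'}\to\mathcal{K}\phi$ defined by $S_1\mu=(\phi_{X',Y'})^\forall(\phi_{X',Y'})^\exists\mu_{X'}$, $S_2\mu=\big((\phi_{X,Y'})^\forall(\phi_{X,Y'})^\exists\mu\big)_{X'}$, $F_1\mu'=\phi^\forall\phi^\exists\underline{\mu'}$, $F_2\mu'=(\phi_{X,Y'})^\forall(\phi_{X,Y'})^\exists\underline{\mu'}$, the following are equivalent: (i) $S_1$ is an isomorphism of complete $L$-lattices; (ii) $S_2$ is an isomorphism of complete $L$-lattices; (iii) $F_1$ is an isomorphism of complete $L$-lattices; (iv) $F_2$ is an isomorphism of complete $L$-lattices.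
   Context: $L=(L,* )$ is a complete residuated lattice: a complete lattice with bottom $0$ and top $1$, equipped with a commutative associative operation $*$ with unit $1$ satisfying $a*\bigvee_i b_i=\bigvee_i a*b_i$; $\to$ is its residuum ($a*b\le c\iff a\le b\to c$). An $L$-context is a triple $(X,Y,\phi)$ with $X,Y$ sets and $\phi\colon X\times Y\to L$. $L^X$ is the set of maps $X\to L$ with $L$-order $L^X(\mu,\mu')=\bigwedge_{x}(\mu(x)\to\mu'(x))$. $(\phi^\exists\mu)(y)=\bigvee_{x\in X}\mu(x)*\phi(x,y)$, $(\phi^\forall\lambda)(x)=\bigwedge_{y\in Y}(\phi(x,y)\to\lambda(y))$. $\mathcal{K}\phi=\{\mu\in L^X\mid\phi^\forall\phi^\exists\mu=\mu\}$, with the $L$-order inherited from $L^X$; it is a complete $L$-lattice. $\phi_{X',Y'}$ is the restriction of $\phi$ to $X'\times Y'$; $\mu_{X'}$ the restriction of $\mu$ to $X'$; $\underline{\mu'}\in L^X$ the extension of $\mu'\in L^{X'}$ by $0$. An isomorphism of complete $L$-lattices is a bijection $f$ that is $L$-isometric, i.e. $P(p,p')=Q(fp,fp')$ for all $p,p'$. *)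

(* Defs.v *)
From Stdlib Require Import ClassicalDescription.

Record CRL := {
  car :> Type;
  le : car -> car -> Prop;
  le_refl : forall a, le a a;
  le_antisym : forall a b, le a b -> le b a -> a = b;
  le_trans : forall a b c, le a b -> le b c -> le a c;
  sup : (car -> Prop) -> car;
  sup_ub : forall (S : car -> Prop) a, S a -> le a (sup S);
  sup_least : forall (S : car -> Prop) b, (forall a, S a -> le a b) -> le (sup S) b;
  one : car;
  one_top : forall a, le a one;
  mul : car -> car -> car;
  mul_assoc : forall a b c, mul a (mul b c) = mul (mul a b) c;
  mul_comm : forall a b, mul a b = mul b a;
  mul_one : forall a, mul a one = a;
  mul_sup : forall a (S : car -> Prop),
      mul a (sup S) = sup (fun c => exists b, S b /\ c = mul a b);
  res : car -> car -> car;
  residuation : forall a b c, le (mul a b) c <-> le a (res b c)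
}.

Arguments le {_}. Arguments sup {_}. Arguments one {_}.
Arguments mul {_}. Arguments res {_}.

Section Defs.
Variable L : CRL.

Definition inf (S : L -> Prop) : L := sup (fun a => forall b, S b -> le a b).
Definition bot : L := sup (fun _ => False).

Definition Lorder {A : Type} (mu mu' : A -> L) : L :=
  inf (fun a => exists x, a = res (mu x) (mu' x)).

Definition up {A B : Type} (phi : A -> B -> L) (mu : A -> L) : B -> L :=
  fun y => sup (fun a => exists x, a = mul (mu x) (phi x y)).
Definition down {A B : Type} (phi : A -> B -> L) (lam : B -> L) : A -> L :=
  fun x => inf (fun a => exists y, a = res (phi x y) (lam y)).
Definition closure {A B : Type} (phi : A -> B -> L) (mu : A -> L) : A -> L :=
  down phi (up phi mu).

(* membership in K phi = { mu in L^A | phi^forall phi^exists mu = mu } *)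
Definition inK {A B : Type} (phi : A -> B -> L) (mu : A -> L) : Prop :=
  closure phi mu = mu.

(* f is an isomorphism of complete L-lattices K phi -> K psi, where K phi and
   K psi carry the L-order inherited from L^A and L^C: f maps K phi into
   K psi, is a bijection between them, and is L-isometric. *)
Definition isIso {A B C D : Type} (phi : A -> B -> L) (psi : C -> D -> L)
    (f : (A -> L) -> (C -> L)) : Prop :=
  (forall mu, inK phi mu -> inK psi (f mu)) /\
  (forall mu nu, inK phi mu -> inK phi nu -> f mu = f nu -> mu = nu) /\
  (forall nu, inK psi nu -> exists mu, inK phi mu /\ f mu = nu) /\
  (forall mu nu, inK phi mu -> inK phi nu -> Lorder mu nu = Lorder (f mu) (f nu)).

Definition sub {X : Type} (X' : X -> Prop) : Type := {x : X | X' x}.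

Definition restr2 {X Y : Type} (phi : X -> Y -> L) (X' : X -> Prop) (Y' : Y -> Prop)
  : sub X' -> sub Y' -> L := fun x y => phi (proj1_sig x) (proj1_sig y).
Definition restrY {X Y : Type} (phi : X -> Y -> L) (Y' : Y -> Prop)
  : X -> sub Y' -> L := fun x y => phi x (proj1_sig y).

Definition restrict {X : Type} (X' : X -> Prop) (mu : X -> L) : sub X' -> L :=
  fun x => mu (proj1_sig x).
Definition extend0 {X : Type} (X' : X -> Prop) (mu' : sub X' -> L) : X -> L :=
  fun x => match excluded_middle_informative (X' x) with
           | left p => mu' (exist _ x p)
           | right _ => bot
           end.

Definition S1 {X Y : Type} (phi : X -> Y -> L) (X' : X -> Prop) (Y' : Y -> Prop)
  (mu : X -> L) : sub X' -> L := closure (restr2 phi X' Y') (restrict X' mu).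
Definition S2 {X Y : Type} (phi : X -> Y -> L) (X' : X -> Prop) (Y' : Y -> Prop)
  (mu : X -> L) : sub X' -> L := restrict X' (closure (restrY phi Y') mu).
Definition F1 {X Y : Type} (phi : X -> Y -> L) (X' : X -> Prop)
  (mu' : sub X' -> L) : X -> L := closure phi (extend0 X' mu').
Definition F2 {X Y : Type} (phi : X -> Y -> L) (X' : X -> Prop) (Y' : Y -> Prop)
  (mu' : sub X' -> L) : X -> L := closure (restrY phi Y') (extend0 X' mu').

End Defs.

(* Main.v *)
Require Import Defs.
From Stdlib Require Import FunctionalExtensionality ProofIrrelevance ClassicalDescription.

Section Basics.
Variable L : CRL.

Lemma lr (a : L) : le a a. Proof. exact (le_refl L a). Qed.
Lemma lt_ (a b c : L) : le a b -> le b c -> le a c. Proof. exact (le_trans L a b c). Qed.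
Lemma la (a b : L) : le a b -> le b a -> a = b. Proof. exact (le_antisym L a b). Qed.
Lemma sub_ub (S : L -> Prop) a : S a -> le a (sup S). Proof. exact (sup_ub L S a). Qed.
Lemma sub_l (S : L -> Prop) b : (forall a, S a -> le a b) -> le (sup S) b.
Proof. exact (sup_least L S b). Qed.
Lemma resid (a b c : L) : le (mul a b) c <-> le a (res b c). Proof. exact (residuation L a b c). Qed.
Lemma inf_lb (S : L -> Prop) b : S b -> le (inf L S) b.
Proof. intro H. unfold inf. apply sub_l. intros a Ha. now apply Ha. Qed.
Lemma inf_glb (S : L -> Prop) a : (forall b, S b -> le a b) -> le a (inf L S).
Proof. intro H. unfold inf. apply sub_ub. exact H. Qed.
Lemma bot_le (a : L) : le (bot L) a.
Proof. unfold bot. apply sub_l. intros b []. Qed.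
Lemma mul_mono_l (a b c : L) : le a b -> le (mul a c) (mul b c).
Proof.
  intro H. apply (proj2 (resid _ _ _)). apply lt_ with b; auto. apply (proj1 (resid _ _ _)). apply lr.
Qed.
Lemma mul_mono_r (a b c : L) : le a b -> le (mul c a) (mul c b).
Proof. intro H. rewrite (mul_comm L c a), (mul_comm L c b). now apply mul_mono_l. Qed.
Lemma one_mul (a : L) : mul one a = a.
Proof. rewrite mul_comm. apply mul_one. Qed.
Lemma mul_bot (a b : L) : le (mul a (bot L)) b.
Proof. unfold bot. rewrite mul_sup. apply sub_l. intros c [d [[] _]]. Qed.
Lemma res_eval (a b : L) : le (mul (res a b) a) b.
Proof. apply (proj2 (resid _ _ _)). apply lr. Qed.

Lemma Lorder_spec {A : Type} (mu nu : A -> L) x : le (mul (Lorder L mu nu) (mu x)) (nu x).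
Proof. apply (proj2 (resid _ _ _)). apply inf_lb. exists x. reflexivity. Qed.
Lemma Lorder_intro {A : Type} s (mu nu : A -> L) :
  (forall x, le (mul s (mu x)) (nu x)) -> le s (Lorder L mu nu).
Proof. intro H. apply inf_glb. intros b [x ->]. apply (proj1 (resid _ _ _)). apply H. Qed.

Section Clo.
Variables (A B : Type) (phi : A -> B -> L).

Lemma clo_up nu x y : le (mul (closure L phi nu x) (phi x y)) (up L phi nu y).
Proof. apply (proj2 (resid _ _ _)). apply inf_lb. exists y. reflexivity. Qed.

Lemma cloK s nu mu :
  (forall x y, le (mul s (mul (nu x) (phi x y))) (up L phi mu y)) ->
  forall x, le (mul s (closure L phi nu x)) (closure L phi mu x).
Proof.
  intros H x. unfold closure at 2, down. apply inf_glb. intros b [y ->].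
  apply (proj1 (resid _ _ _)). rewrite <- mul_assoc.
  apply lt_ with (mul s (up L phi nu y)).
  - apply mul_mono_r. apply clo_up.
  - unfold up at 1. rewrite mul_sup. apply sub_l. intros c [d [[x' ->] ->]]. apply H.
Qed.

Lemma clo_ext mu x : le (mu x) (closure L phi mu x).
Proof.
  unfold closure, down. apply inf_glb. intros b [y ->]. apply (proj1 (resid _ _ _)).
  apply sub_ub. exists x. reflexivity.
Qed.

Lemma clo_mono_s s nu mu :
  (forall x, le (mul s (nu x)) (mu x)) ->
  forall x, le (mul s (closure L phi nu x)) (closure L phi mu x).
Proof.
  intros H. apply cloK. intros x y. rewrite mul_assoc.
  apply lt_ with (mul (mu x) (phi x y)). now apply mul_mono_l.
  apply sub_ub. exists x. reflexivity.
Qed.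

Lemma clo_mono nu mu : (forall x, le (nu x) (mu x)) ->
  forall x, le (closure L phi nu x) (closure L phi mu x).
Proof.
  intros H x. rewrite <- (one_mul (closure L phi nu x)). apply clo_mono_s.
  intro; rewrite one_mul; auto.
Qed.

Lemma clo_idem mu : closure L phi (closure L phi mu) = closure L phi mu.
Proof.
  extensionality x. apply la.
  - rewrite <- (one_mul (closure L phi (closure L phi mu) x)). apply cloK.
    intros; rewrite one_mul; apply clo_up.
  - apply clo_ext.
Qed.

Lemma Lorder_clo mu nu : le (Lorder L mu nu) (Lorder L (closure L phi mu) (closure L phi nu)).
Proof. apply Lorder_intro. apply clo_mono_s. apply Lorder_spec. Qed.
End Clo.
End Basics.

Section Ctx.
Variables (L : CRL) (X Y : Type) (phi : X -> Y -> L) (X' : X -> Prop) (Y' : Y -> Prop).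
Notation C := (closure L phi).
Notation D := (closure L (restrY L phi Y')).
Notation C' := (closure L (restr2 L phi X' Y')).
Notation E := (extend0 L X').
Notation R := (restrict L X').

Lemma RE nu : R (E nu) = nu.
Proof.
  extensionality x'. destruct x' as [x p]. unfold restrict, extend0; simpl.
  destruct (excluded_middle_informative (X' x)) as [q|q].
  - f_equal. f_equal. apply proof_irrelevance.
  - contradiction.
Qed.

Lemma ER_le (m : X -> L) x : le (E (R m) x) (m x).
Proof.
  unfold extend0, restrict. destruct (excluded_middle_informative (X' x)).
  apply lr. apply bot_le.
Qed.

Lemma R_mono (a b : X -> L) : (forall x, le (a x) (b x)) -> forall x', le (R a x') (R b x').
Proof. intros H x'. apply H. Qed.

Lemma up_eq nu : up L (restr2 L phi X' Y') nu = up L (restrY L phi Y') (E nu).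
Proof.
  extensionality y. unfold up. apply la.
  - apply sub_l. intros a [x' ->]. apply sub_ub. exists (proj1_sig x').
    unfold restr2, restrY.
    assert (H := f_equal (fun f => f x') (RE nu)). unfold restrict in H; simpl in H. now rewrite H.
  - apply sub_l. intros a [x ->]. unfold extend0.
    destruct (excluded_middle_informative (X' x)) as [p|p].
    + apply sub_ub. exists (exist _ x p). reflexivity.
    + rewrite mul_comm. apply mul_bot.
Qed.

Lemma C'_eq nu : C' nu = R (D (E nu)).
Proof.
  unfold closure at 1. rewrite up_eq. reflexivity.
Qed.

Lemma CleD m x : le (C m x) (D m x).
Proof.
  unfold closure, down. apply inf_glb. intros b [y' ->]. apply inf_lb.
  exists (proj1_sig y'). reflexivity.
Qed.

Lemma DC m : D (C m) = D m.
Proof.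
  extensionality x. apply la.
  - apply lt_ with (D (D m) x). apply clo_mono. apply CleD. rewrite clo_idem. apply lr.
  - apply clo_mono. apply clo_ext.
Qed.

Lemma S2_in mu : C' (R (D mu)) = R (D mu).
Proof.
  rewrite C'_eq. extensionality x'. apply la.
  - apply lt_ with (R (D (D mu)) x'). apply R_mono. apply clo_mono. apply ER_le.
    rewrite clo_idem. apply lr.
  - pattern (R (D mu)) at 1. rewrite <- (RE (R (D mu))). apply R_mono. apply clo_ext.
Qed.

Section Nu.
Variable nu : sub X' -> L.
Hypothesis Hnu : C' nu = nu.

Lemma DEnu : R (D (E nu)) = nu.
Proof. rewrite <- C'_eq. exact Hnu. Qed.

Lemma RCE : R (C (E nu)) = nu.
Proof.
  extensionality x'. apply la.
  - apply lt_ with (R (D (E nu)) x'). apply R_mono. apply CleD. rewrite DEnu. apply lr.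
  - apply lt_ with (R (E nu) x'). rewrite RE. apply lr. apply R_mono. apply clo_ext.
Qed.

Lemma S1F1 : S1 L phi X' Y' (F1 L phi X' nu) = nu.
Proof. unfold S1, F1. rewrite RCE. exact Hnu. Qed.
Lemma S2F1 : S2 L phi X' Y' (F1 L phi X' nu) = nu.
Proof. unfold S2, F1. rewrite DC. exact DEnu. Qed.
Lemma S2F2 : S2 L phi X' Y' (F2 L phi X' Y' nu) = nu.
Proof. unfold S2, F2. rewrite clo_idem. exact DEnu. Qed.
End Nu.

Lemma Lorder_R (a b : X -> L) : le (Lorder L a b) (Lorder L (R a) (R b)).
Proof. apply Lorder_intro. intro x'. apply Lorder_spec. Qed.

Lemma Lorder_E (a b : sub X' -> L) : le (Lorder L a b) (Lorder L (E a) (E b)).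
Proof.
  apply Lorder_intro. intro x. unfold extend0.
  destruct (excluded_middle_informative (X' x)). apply Lorder_spec. apply mul_bot.
Qed.

Lemma LS1 a b : le (Lorder L a b) (Lorder L (S1 L phi X' Y' a) (S1 L phi X' Y' b)).
Proof. eapply lt_. apply Lorder_R. apply Lorder_clo. Qed.
Lemma LS2 a b : le (Lorder L a b) (Lorder L (S2 L phi X' Y' a) (S2 L phi X' Y' b)).
Proof. eapply lt_. apply Lorder_clo. apply Lorder_R. Qed.
Lemma LF1 a b : le (Lorder L a b) (Lorder L (F1 L phi X' a) (F1 L phi X' b)).
Proof. eapply lt_. apply Lorder_E. apply Lorder_clo. Qed.

Definition P := forall mu, inK L phi mu -> exists nu, inK L (restr2 L phi X' Y') nu /\ F1 L phi X' nu = mu.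

Lemma S1_in mu : inK L (restr2 L phi X' Y') (S1 L phi X' Y' mu).
Proof. unfold inK, S1. apply clo_idem. Qed.
Lemma S2_in' mu : inK L (restr2 L phi X' Y') (S2 L phi X' Y' mu).
Proof. unfold inK, S2. apply S2_in. Qed.
Lemma F1_in nu : inK L phi (F1 L phi X' nu).
Proof. unfold inK, F1. apply clo_idem. Qed.

Lemma inj_P (S : (X -> L) -> (sub X' -> L)) :
  (forall nu, inK L (restr2 L phi X' Y') nu -> S (F1 L phi X' nu) = nu) ->
  (forall mu, inK L (restr2 L phi X' Y') (S mu)) ->
  (forall mu nu, inK L phi mu -> inK L phi nu -> S mu = S nu -> mu = nu) -> P.
Proof.
  intros HSF Hin Hinj mu Hmu. exists (S mu). split; auto.
  apply Hinj; auto using F1_in.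
Qed.

Lemma iso_lorder {A B} (f : (A -> L) -> (B -> L)) (g : (B -> L) -> (A -> L)) a b :
  le (Lorder L a b) (Lorder L (f a) (f b)) ->
  le (Lorder L (f a) (f b)) (Lorder L (g (f a)) (g (f b))) ->
  g (f a) = a -> g (f b) = b -> Lorder L a b = Lorder L (f a) (f b).
Proof. intros H1 H2 E1 E2. rewrite E1, E2 in H2. apply la; auto. Qed.

Lemma P_S (S : (X -> L) -> (sub X' -> L)) :
  (forall nu, inK L (restr2 L phi X' Y') nu -> S (F1 L phi X' nu) = nu) ->
  (forall mu, inK L (restr2 L phi X' Y') (S mu)) ->
  (forall a b, le (Lorder L a b) (Lorder L (S a) (S b))) ->
  P -> isIso L phi (restr2 L phi X' Y') S.
Proof.
  intros HSF Hin HL HP.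
  assert (FS : forall mu, inK L phi mu -> F1 L phi X' (S mu) = mu).
  { intros mu Hmu. destruct (HP mu Hmu) as [nu [Hn <-]]. now rewrite HSF. }
  split; [|split; [|split]]; auto.
  - intros mu nu Hm Hn E. now rewrite <- (FS mu Hm), <- (FS nu Hn), E.
  - intros nu Hn. exists (F1 L phi X' nu). split. apply F1_in. auto.
  - intros a b Ha Hb. apply (iso_lorder S (F1 L phi X')); auto. apply LF1.
Qed.

Lemma P_F1 : P -> isIso L (restr2 L phi X' Y') phi (F1 L phi X').
Proof.
  intros HP. split; [|split; [|split]].
  - intros; apply F1_in.
  - intros a b Ha Hb E. now rewrite <- (S1F1 a Ha), <- (S1F1 b Hb), E.
  - exact HP.
  - intros a b Ha Hb. apply (iso_lorder (F1 L phi X') (S1 L phi X' Y')).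
    apply LF1. apply LS1. now apply S1F1. now apply S1F1.
Qed.

Lemma P_F2eq : P -> forall nu, inK L (restr2 L phi X' Y') nu ->
  F2 L phi X' Y' nu = F1 L phi X' nu.
Proof.
  intros HP nu Hn.
  assert (Hinj : forall mu, inK L phi mu -> F1 L phi X' (S2 L phi X' Y' mu) = mu).
  { intros mu Hmu. destruct (HP mu Hmu) as [n [Hn' <-]]. now rewrite S2F1. }
  assert (E1 : C (D (E nu)) = C (E nu)).
  { rewrite <- (Hinj (C (D (E nu)))) by apply clo_idem.
    unfold S2, F1. rewrite DC, clo_idem, DEnu; auto. }
  unfold F2, F1. extensionality x. apply la.
  - rewrite <- E1. apply clo_ext.
  - apply CleD.
Qed.

Lemma P_F2 : P -> isIso L (restr2 L phi X' Y') phi (F2 L phi X' Y').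
Proof.
  intros HP. destruct (P_F1 HP) as [H1 [H2 [H3 H4]]].
  pose proof (P_F2eq HP) as Heq.
  split; [|split; [|split]].
  - intros; rewrite Heq; auto.
  - intros a b Ha Hb. rewrite !Heq; auto.
  - intros mu Hm. destruct (H3 mu Hm) as [n [Hn E]]. exists n. rewrite Heq; auto.
  - intros a b Ha Hb. rewrite !Heq; auto.
Qed.

Lemma F2_P : isIso L (restr2 L phi X' Y') phi (F2 L phi X' Y') -> P.
Proof.
  intros [H1 [H2 [H3 H4]]]. apply (inj_P (S2 L phi X' Y')).
  apply S2F1. apply S2_in'.
  intros a b Ha Hb E.
  destruct (H3 a Ha) as [n1 [Hn1 <-]]. destruct (H3 b Hb) as [n2 [Hn2 <-]].
  rewrite !S2F2 in E; auto. now rewrite E.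
Qed.

End Ctx.

Theorem mainTheorem3 (L : CRL) (X Y : Type) (phi : X -> Y -> L)
    (X' : X -> Prop) (Y' : Y -> Prop) :
  let phi' := restr2 L phi X' Y' in
  (isIso L phi phi' (S1 L phi X' Y') <-> isIso L phi phi' (S2 L phi X' Y')) /\
  (isIso L phi phi' (S2 L phi X' Y') <-> isIso L phi' phi (F1 L phi X')) /\
  (isIso L phi' phi (F1 L phi X') <-> isIso L phi' phi (F2 L phi X' Y')).
Proof.
  intro phi'.
  assert (A1 : isIso L phi phi' (S1 L phi X' Y') <-> P L X Y phi X' Y').
  { split.
    - intros [_ [Hi _]]. apply inj_P with (S1 L phi X' Y'); auto.
      apply S1F1. apply S1_in.
    - apply P_S. apply S1F1. apply S1_in. apply LS1. }
  assert (A2 : isIso L phi phi' (S2 L phi X' Y') <-> P L X Y phi X' Y').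
  { split.
    - intros [_ [Hi _]]. apply inj_P with (S2 L phi X' Y'); auto.
      apply S2F1. apply S2_in'.
    - apply P_S. apply S2F1. apply S2_in'. apply LS2. }
  assert (A3 : isIso L phi' phi (F1 L phi X') <-> P L X Y phi X' Y').
  { split. intros [_ [_ [H _]]]. exact H. apply P_F1. }
  assert (A4 : isIso L phi' phi (F2 L phi X' Y') <-> P L X Y phi X' Y').
  { split. apply F2_P. apply P_F2. }
  tauto.
Qed.
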